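(* For every integer $n\ge 2$, the $n$-abomination $\mathbb{X}_n$ has width $2^{n+2}$; that is, $\mathbb{X}_n$ contains an antichain with $2^{n+2}$ elements and every antichain in $\mathbb{X}_n$ has at most $2^{n+2}$ elements.
   Context: $\mathbb{N}=\{0,1,2,\dots\}$. Fix an integer $n\ge 2$ and put $N=2^{n+1}-1$. Let $T_n$ be the set of triples $\langle k_1,k_2,k_3\rangle$ of pairwise distinct natural numbers $\le N$, with a fixed enumeration $T_n=\{s_0,\dots,s_t\}$. Let $U_n$ be a set of pairwise distinct elements $a_m,b_m$ ($m\in\mathbb{N}$) and $c_{m,k},d_{m,k},e^a_{m,k},e^b_{m,k}$ ($m\in\mathbb{N}$, $0\le k\le N$). Define $x\prec y$ on $U_n$ iff one of: (1) $x=a_m$ and $y\in\{c_{m,k_1},c_{m,k_2}\}$, where $s_j=\langle k_1,k_2,k_3\rangle$ with $j\equiv m \bmod (t+1)$; (2) $x=b_m$ and $y\in\{c_{m,k_1},c_{m,k_3}\}$, with $s_j$ as in (1); (3) $m\ge1$, $x=c_{m,k}$, and either $y=e^a_{m-1,j}$ with $j\ne k$, or $y=e^b_{m-1,i}$ for any $i\le N$; (4) $x=d_{m,k}$ and $y=c_{m,j}$ with $j\neq k$; (5) $x=e^a_{m,k}$ and either $y=a_m$ or $y=d_{m,j}$ with $j\ne k$; (6) $x=e^b_{m,k}$ and either $y=b_m$ or $y=d_{m,j}$ with $j\ne k$. Let $\le$ be the reflexive transitive closure of $\prec$. The $n$-abomination $\mathbb{X}_n$ is the poset $U_n\cup\{\bot\}$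 where $\bot$ is a new least element, with the topology in which $U$ is open iff $\bot\notin U$ or $U$ is cofinite. A rooted poset has width $w$ if its largest antichain has exactly $w$ elements. *)

(* Defs.v *)
From Stdlib Require Import Arith List Relations.
Import ListNotations.

Definition bigN (n : nat) : nat := 2 ^ (S n) - 1.

Definition triple_ok (n : nat) (t : nat * nat * nat) : Prop :=
  let '(k1, k2, k3) := t in
  k1 <> k2 /\ k1 <> k3 /\ k2 <> k3 /\
  k1 <= bigN n /\ k2 <= bigN n /\ k3 <= bigN n.

Definition enumerates (n : nat) (s : list (nat * nat * nat)) : Prop :=
  NoDup s /\ forall t, In t s <-> triple_ok n t.

Definition sj (s : list (nat * nat * nat)) (m : nat) : nat * nat * nat :=
  nth (m mod length s) s (0, 0, 0).

(* Elements of X_n = U_n ∪ {⊥}: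
   A m = a_m, B m = b_m, C m k = c_{m,k}, D m k = d_{m,k},
   EA m k = e^a_{m,k}, EB m k = e^b_{m,k}. *)
Inductive elt : Type :=
| Bot : elt
| A : nat -> elt
| B : nat -> elt
| C : nat -> nat -> elt
| D : nat -> nat -> elt
| EA : nat -> nat -> elt
| EB : nat -> nat -> elt.

Definition inX (n : nat) (x : elt) : Prop :=
  match x with
  | Bot | A _ | B _ => True
  | C _ k | D _ k | EA _ k | EB _ k => k <= bigN n
  end.

Definition prec (n : nat) (s : list (nat * nat * nat)) (x y : elt) : Prop :=
  match x, y with
  | A m, C m' k =>
      let '(k1, k2, _) := sj s m in m' = m /\ (k = k1 \/ k = k2)
  | B m, C m' k =>
      let '(k1, _, k3) := sj s m in m' = m /\ (k = k1 \/ k = k3)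
  | C m k, EA m' j =>
      1 <= m /\ m' = m - 1 /\ k <= bigN n /\ j <= bigN n /\ j <> k
  | C m k, EB m' i =>
      1 <= m /\ m' = m - 1 /\ k <= bigN n /\ i <= bigN n
  | D m k, C m' j =>
      m' = m /\ k <= bigN n /\ j <= bigN n /\ j <> k
  | EA m k, A m' => m' = m /\ k <= bigN n
  | EA m k, D m' j => m' = m /\ k <= bigN n /\ j <= bigN n /\ j <> k
  | EB m k, B m' => m' = m /\ k <= bigN n
  | EB m k, D m' j => m' = m /\ k <= bigN n /\ j <= bigN n /\ j <> k
  | _, _ => False
  end.

Definition leX (n : nat) (s : list (nat * nat * nat)) (x y : elt) : Prop :=
  x = Bot \/ clos_refl_trans elt (prec n s) x y.

Definition antichain (n : nat) (s : list (nat * nat * nat)) (l : list elt) : Prop :=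
  NoDup l /\ (forall x, In x l -> inX n x) /\
  (forall x y, In x l -> In y l -> x <> y -> ~ leX n s x y).

(* Main.v *)
Require Import Defs.
From Stdlib Require Import Arith List Relations Lia.
Import ListNotations.

Section S.
Variable n : nat.
Variable s : list (nat * nat * nat).
Hypothesis HN : 2 <= bigN n.
Hypothesis Htri : forall m, triple_ok n (sj s m).

Notation N := (bigN n).
Notation R := (clos_refl_trans elt (prec n s)).

Definition fidx (x : elt) : bool * nat :=
  match x with
  | Bot => (true, 0) | A _ => (true, 0)
  | B m => let '(k1, _, k3) := sj s m in (false, if k1 =? 0 then k3 else k1)
  | C _ k => (false, k)
  | D _ j => if j <? N then (true, S j) else (false, 0)
  | EA _ k => (true, k) | EB _ k => (false, k)
  end.

Definition lv (x : elt) : nat :=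
  match x with Bot => 0 | A m | B m => m | C m _ | D m _ | EA m _ | EB m _ => m end.

Definition top (c : bool * nat) (m : nat) : elt :=
  match c with
  | (true, 0) => A m | (true, S j) => D m j | (false, k) => C m k end.

Definition bot (c : bool * nat) (m : nat) : elt :=
  if fst c then EA m (snd c) else EB m (snd c).

Lemma EB_C : forall m k, k <= N -> R (EB m k) (C m k).
Proof.
  intros m k Hk. destruct k as [|k'].
  - apply rt_trans with (D m 1); apply rt_step; simpl; repeat split; lia.
  - apply rt_trans with (D m 0); apply rt_step; simpl; repeat split; lia.
Qed.

Lemma fidx_valid : forall x, inX n x -> snd (fidx x) <= N.
Proof.
  intros x Hx; destruct x; simpl in *; try lia.
  - pose proof (Htri n0). destruct (sj s n0) as [[k1 k2] k3].
    simpl in H. destruct (k1 =? 0); simpl; lia.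
  - destruct (Nat.ltb_spec n1 N); simpl; lia.
Qed.

Lemma L1 : forall x, x <> Bot -> inX n x ->
  R (bot (fidx x) (lv x)) x /\ R x (top (fidx x) (lv x)).
Proof.
  intros x Hb Hx; destruct x; simpl in *.
  - congruence.
  - split; [apply rt_step; simpl; split; lia | apply rt_refl].
  - pose proof (Htri n0). destruct (sj s n0) as [[k1 k2] k3] eqn:E.
    simpl in H. unfold bot, top; simpl.
    destruct (Nat.eqb_spec k1 0); simpl; split; apply rt_step; simpl;
      rewrite ?E; repeat split; lia.
  - unfold bot; simpl. split; [apply EB_C; auto | apply rt_refl].
  - destruct (Nat.ltb_spec n1 N); unfold bot, top; simpl.
    + split; [apply rt_step; simpl; repeat split; lia | apply rt_refl].
    + split; apply rt_step; simpl; repeat split; lia.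
  - unfold bot; simpl. split; [apply rt_refl|].
    destruct n1; simpl; apply rt_step; simpl; repeat split; lia.
  - unfold bot; simpl. split; [apply rt_refl| apply EB_C; auto].
Qed.

Lemma L2 : forall c m, snd c <= N -> R (top c (S m)) (bot c m).
Proof.
  intros [[|] k] m Hk; simpl in Hk; unfold bot, top; simpl.
  - destruct k as [|j].
    + pose proof (Htri (S m)). destruct (sj s (S m)) as [[k1 k2] k3] eqn:E.
      simpl in H.
      destruct (Nat.eqb_spec k1 0).
      * apply rt_trans with (C (S m) k2); apply rt_step; simpl; rewrite ?E;
          repeat split; lia.
      * apply rt_trans with (C (S m) k1); apply rt_step; simpl; rewrite ?E;
          repeat split; lia.
    + destruct j as [|j'].
      * apply rt_trans with (C (S m) 2); apply rt_step; simpl; repeat split; lia.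
      * apply rt_trans with (C (S m) 0); apply rt_step; simpl; repeat split; lia.
  - apply rt_step; simpl; repeat split; lia.
Qed.

Lemma bot_top : forall c m, snd c <= N -> R (bot c m) (top c m).
Proof.
  intros [[|] k] m Hk.
  - destruct k as [|j].
    + pose proof (L1 (EA m 0)) as H. simpl in H. apply H; [congruence | lia].
    + pose proof (L1 (EA m (S j))) as H. simpl in H. apply H; [congruence | simpl in *; lia].
  - pose proof (L1 (EB m k)) as H. simpl in H. apply H; [congruence | simpl in *; lia].
Qed.

Lemma L4 : forall c m d, snd c <= N -> R (top c (S (d + m))) (bot c m).
Proof.
  intros c m d Hc. induction d.
  - apply L2; auto.
  - simpl. apply rt_trans with (bot c (S (d + m))). apply L2; auto.
    apply rt_trans with (top c (S (d + m))). apply bot_top; auto. auto.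
Qed.

Lemma classify : forall x, x <> Bot -> inX n x ->
  x = bot (fidx x) (lv x) \/ x = top (fidx x) (lv x) \/ x = B (lv x) \/ x = D (lv x) N.
Proof.
  intros x Hb Hx; destruct x; simpl in *; try congruence.
  all: try (right; left; reflexivity).
  all: try (left; reflexivity).
  all: try (right; right; left; reflexivity).
  destruct (Nat.ltb_spec n1 N); simpl.
  - right; left; reflexivity.
  - right; right; right. f_equal; lia.
Qed.

Lemma comparable : forall x y, x <> Bot -> y <> Bot -> inX n x -> inX n y ->
  fidx x = fidx y -> x <> y -> R x y \/ R y x.
Proof.
  intros x y Hx Hy Ix Iy Hf Hne.
  destruct (lt_eq_lt_dec (lv x) (lv y)) as [[Hl|Hl]|Hl].
  - right. destruct (L1 y Hy Iy) as [_ Hy2]. destruct (L1 x Hx Ix) as [Hx1 _].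
    apply rt_trans with (top (fidx y) (lv y)); auto.
    apply rt_trans with (bot (fidx x) (lv x)); auto.
    rewrite Hf. replace (lv y) with (S ((lv y - lv x - 1) + lv x)) by lia.
    apply L4. apply fidx_valid; auto.
  - destruct (L1 y Hy Iy) as [Hy1 Hy2]. destruct (L1 x Hx Ix) as [Hx1 Hx2].
    rewrite Hf, Hl in Hx1, Hx2.
    destruct (classify x Hx Ix) as [E|[E|[E|E]]].
    + left. rewrite E. rewrite Hf, Hl. auto.
    + right. rewrite E. rewrite Hf, Hl. auto.
    + destruct (classify y Hy Iy) as [E'|[E'|[E'|E']]].
      * right. rewrite E'. exact Hx1.
      * left. rewrite E'. exact Hx2.
      * exfalso. apply Hne. rewrite E, E', Hl. auto.
      * exfalso. rewrite E, E' in Hf. simpl in Hf.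
        pose proof (Htri (lv x)). try rewrite <- Hl in Hf.
        destruct (sj s (lv x)) as [[k1 k2] k3]. simpl in H.
        destruct (Nat.ltb_spec N N); try lia.
        destruct (Nat.eqb_spec k1 0); inversion Hf; lia.
    + destruct (classify y Hy Iy) as [E'|[E'|[E'|E']]].
      * right. rewrite E'. exact Hx1.
      * left. rewrite E'. exact Hx2.
      * exfalso. rewrite E, E' in Hf. simpl in Hf.
        pose proof (Htri (lv y)). try rewrite Hl in Hf.
        destruct (sj s (lv y)) as [[k1 k2] k3]. simpl in H.
        destruct (Nat.ltb_spec N N); try lia.
        destruct (Nat.eqb_spec k1 0); inversion Hf; lia.
      * exfalso. apply Hne. rewrite E, E', Hl. auto.
  - left. destruct (L1 x Hx Ix) as [_ Hx2]. destruct (L1 y Hy Iy) as [Hy1 _].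
    apply rt_trans with (top (fidx x) (lv x)); auto.
    apply rt_trans with (bot (fidx y) (lv y)); auto.
    rewrite <- Hf. replace (lv x) with (S ((lv x - lv y - 1) + lv y)) by lia.
    apply L4. apply fidx_valid; auto.
Qed.

End S.

Definition gv (x : elt) : nat :=
  match x with
  | Bot => 0 | C m _ => 3 * m | A m | B m | D m _ => 3 * m + 1
  | EA m _ | EB m _ => 3 * m + 2 end.

Lemma prec_g : forall n s x y, prec n s x y -> gv y < gv x.
Proof.
  intros n s x y H; destruct x, y; simpl in *; try contradiction;
  try (destruct (sj s n0) as [[k1 k2] k3]); try lia.
Qed.

Lemma rt_g : forall n s x y, clos_refl_trans elt (prec n s) x y -> x = y \/ gv y < gv x.
Proof.
  intros n s x y H. apply clos_rt_rt1n in H. induction H; auto.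
  right. apply prec_g in H. destruct IHclos_refl_trans_1n; subst; lia.
Qed.

Lemma bigN_ge : forall n, 2 <= n -> 7 <= bigN n /\ bigN n + 1 = 2 ^ S n.
Proof.
  intros n Hn. unfold bigN.
  assert (2 ^ 3 <= 2 ^ S n) by (apply Nat.pow_le_mono_r; lia).
  simpl in H. simpl. lia.
Qed.

Lemma tri_of_enum : forall n s, 2 <= n -> enumerates n s -> forall m, triple_ok n (sj s m).
Proof.
  intros n s Hn [Hnd Hs] m.
  destruct (bigN_ge n Hn) as [H7 _].
  assert (In (0,1,2) s) by (apply Hs; simpl; repeat split; lia).
  assert (0 < length s) by (destruct s; simpl in *; [contradiction | lia]).
  apply Hs. unfold sj. apply nth_In. apply Nat.mod_upper_bound. lia.
Qed.

Lemma nodup_map_inj : forall (X Y : Type) (f : X -> Y) (l : list X),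
  NoDup l -> (forall x y, In x l -> In y l -> f x = f y -> x = y) -> NoDup (map f l).
Proof.
  intros X Y f l Hnd Hi. induction Hnd; simpl; constructor.
  - intro Hin. apply in_map_iff in Hin. destruct Hin as [z [Hz Hz']].
    assert (z = x) by (apply Hi; simpl; auto). subst; contradiction.
  - apply IHHnd. intros; apply Hi; simpl; auto.
Qed.

Theorem mainTheorem5 :
  forall (n : nat), 2 <= n ->
  forall (s : list (nat * nat * nat)), enumerates n s ->
    (exists l : list elt, antichain n s l /\ length l = 2 ^ (n + 2)) /\
    (forall l : list elt, antichain n s l -> length l <= 2 ^ (n + 2)).
Proof.
  intros n Hn s Hs.
  destruct (bigN_ge n Hn) as [H7 HN1].
  assert (Hpow : 2 ^ (n + 2) = 2 * (bigN n + 1)).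
  { rewrite HN1. replace (n + 2) with (S (S n)) by lia. reflexivity. }
  pose proof (tri_of_enum n s Hn Hs) as Htri.
  split.
  - exists (map (EA 0) (seq 0 (bigN n + 1)) ++ map (EB 0) (seq 0 (bigN n + 1))).
    split.
    + split; [|split].
      * apply NoDup_app.
        -- apply nodup_map_inj; [apply seq_NoDup|]. intros x y _ _ E; injection E; auto.
        -- apply nodup_map_inj; [apply seq_NoDup|]. intros x y _ _ E; injection E; auto.
        -- intros a Ha Hb. apply in_map_iff in Ha, Hb.
           destruct Ha as [? [<- _]]. destruct Hb as [? [E _]]. discriminate.
      * intros x Hx. apply in_app_or in Hx.
        destruct Hx as [Hx|Hx]; apply in_map_iff in Hx; destruct Hx as [k [<- Hk]];
          apply in_seq in Hk; simpl; lia.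
      * intros x y Hx Hy Hne [Hb|Hr].
        -- subst. apply in_app_or in Hx.
           destruct Hx as [Hx|Hx]; apply in_map_iff in Hx; destruct Hx as [k [E _]]; discriminate.
        -- apply rt_g in Hr. destruct Hr as [Hr|Hr]; [contradiction|].
           assert (forall z, In z (map (EA 0) (seq 0 (bigN n + 1)) ++ map (EB 0) (seq 0 (bigN n + 1))) -> gv z = 2) as G.
           { intros z Hz. apply in_app_or in Hz.
             destruct Hz as [Hz|Hz]; apply in_map_iff in Hz; destruct Hz as [k [<- _]]; reflexivity. }
           rewrite (G x Hx), (G y Hy) in Hr. lia.
    + rewrite length_app, !length_map, length_seq. lia.
  - intros l [Hnd [Hin Hac]].
    destruct (in_dec (fun a b : elt => ltac:(decide equality; decide equality)) Bot l) as [HB|HB].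
    + assert (incl l [Bot]).
      { intros x Hx. destruct (ltac:(decide equality; decide equality) : {x = Bot} + {x <> Bot}) as [E|E].
        - subst; simpl; auto.
        - exfalso. apply (Hac Bot x HB Hx (fun h => E (eq_sym h))). left; reflexivity. }
      pose proof (NoDup_incl_length Hnd H). simpl in H0. lia.
    + assert (HNd : NoDup (map (fidx n s) l)).
      { apply nodup_map_inj; auto. intros x y Hx Hy Hf.
        destruct (ltac:(decide equality; decide equality) : {x = y} + {x <> y}) as [E|E]; auto.
        exfalso.
        assert (x <> Bot) by (intro; subst; contradiction).
        assert (y <> Bot) by (intro; subst; contradiction).
        destruct (comparable n s ltac:(lia) Htri x y H H0 (Hin x Hx) (Hin y Hy) Hf E) as [Hr|Hr].
        - apply (Hac x y Hx Hy E). right; exact Hr.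
        - apply (Hac y x Hy Hx (fun h => E (eq_sym h))). right; exact Hr. }
      assert (Hincl : incl (map (fidx n s) l)
                (map (pair true) (seq 0 (bigN n + 1)) ++ map (pair false) (seq 0 (bigN n + 1)))).
      { intros c Hc. apply in_map_iff in Hc. destruct Hc as [x [<- Hx]].
        pose proof (fidx_valid n s ltac:(lia) Htri x (Hin x Hx)) as V.
        destruct (fidx n s x) as [[|] k]; simpl in V; apply in_or_app;
          [left|right]; apply in_map; apply in_seq; lia. }
      pose proof (NoDup_incl_length HNd Hincl).
      rewrite length_map, length_app, !length_map, length_seq in H. lia.
Qed.
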